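(* Let $\mathbf{P}\subset\mathbb{C}$ be a Jordan arc and let $A\colon\mathbf{P}\to\mathbb{C}^{n\times n}$, $B\colon\mathbf{P}\to\mathbb{C}^{n\times m}$ be continuous. Suppose that the Kronecker indices of $(A(\theta),B(\theta))$ are independent of $\theta$, say $\kappa(A(\theta),B(\theta))=(\kappa_1,\dots,\kappa_m)$ for all $\theta\in\mathbf{P}$, and that $\sum_{i=1}^m\kappa_i=n$. Then $(A,B)$ is restricted feedback equivalent on $\mathbf{P}$ to $(A_\kappa,B_\kappa)$, i.e. there exists a restricted feedback transformation $(T,F,S)$ on $\mathbf{P}$ with $(T,F,S)\cdot(A,B)=(A_\kappa,B_\kappa)$, equivalently $T(\theta)A(\theta)-A_\kappa T(\theta)=B_\kappa F(\theta)$ and $T(\theta)B(\theta)=B_\kappa S(\theta)$ for all $\theta\in\mathbf{P}$.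
   Context: A Jordan arc is the image of a continuous injective map from a compact interval into $\mathbb{C}$. For a pair $(A,B)\in\mathbb{C}^{n\times n}\times\mathbb{C}^{n\times m}$ with columns $b_1,\dots,b_m$ of $B$, the Kronecker indices $\kappa(A,B)=(\kappa_1,\dots,\kappa_m)$ are defined as follows: go through the list $b_1,\dots,b_m,Ab_1,\dots,Ab_m,A^2b_1,\dots,A^2b_m,\dots,A^{n-1}b_1,\dots,A^{n-1}b_m$ from left to right and select each vector that is linearly independent of the previously selected ones; the selected vectors are then of the form $b_i,Ab_i,\dots,A^{\kappa_i-1}b_i$ ($i=1,\dots,m$), which defines $\kappa_i$ ($\kappa_i=0$ if $b_i$ is not selected). The pair is reachable iff $\sum_i\kappa_i=n$. For $\kappa=(\kappa_1,\dots,\kappa_m)$ with $\sum\kappa_i=n$, $(A_\kappa,B_\kappa)$ is the pair with $A_\kappa=\mathrm{diag}(A_{\kappa_1},\dots,A_{\kappa_m})\in\mathbb{C}^{n\times n}$ (block diagonal) and $B_\kappa\in\mathbb{C}^{n\times m}$ block diagonal with blocks $b_{\kappa_1},\dots,b_{\kappa_m}$, where for $\kappa_i\ge1$, $A_{\kappa_i}\in\mathbb{C}^{\kappa_i\times\kappa_i}$ is the lower shift matrix (ones on the first subdiagonal, zeros elsewhere) and $b_{\kappa_i}=(1,0,\dots,0)^\top\in\mathbb{C}^{\kappa_i}$; if $\kappa_i=0$ the block $A_{\kappa_i}$ is absent and the $i$-th column of $B_\kappa$ is zero. Equivalently, the $i$-th column of $B_\kappa$ is $e_{1+\kappa_1+\dots+\kappa_{i-1}}$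 when $\kappa_i\ge1$. A restricted feedback transformation on $\mathbf{P}$ is a triple $(T,F,S)$ of continuous maps $T\colon\mathbf{P}\to\mathbb{C}^{n\times n}$, $F\colon\mathbf{P}\to\mathbb{C}^{m\times n}$, $S\colon\mathbf{P}\to\mathbb{C}^{m\times m}$ such that for every $\theta$, $T(\theta)$ is invertible and $S(\theta)$ is upper triangular with all diagonal entries equal to $1$. It acts on pairs of continuous maps by $(T,F,S)\cdot(A,B)=\big(T(A-BS^{-1}F)T^{-1},\,TBS^{-1}\big)$, pointwise in $\theta$. Two pairs are restricted feedback equivalent on $\mathbf{P}$ if one is obtained from the other by such an action. *)

(* Defs.v *)
From HB Require Import structures.
From mathcomp Require Import all_boot all_order all_algebra.
From mathcomp Require Import complex.
From mathcomp Require Import all_classical all_reals all_analysis.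
Export numFieldTopology.Exports numFieldNormedType.Exports.

Set Implicit Arguments.
Unset Strict Implicit.
Unset Printing Implicit Defensive.

Import Order.TTheory GRing.Theory Num.Theory.
Import ComplexField.
Local Open Scope classical_set_scope.
Local Open Scope ring_scope.

(* Topology on R[i]: the metric topology of the modulus (generic instance
   for numClosedFieldType, made canonical on R[i]). *)
HB.instance Definition _ (R : rcfType) :=
  PseudoPointedMetric.copy R[i] (R[i] : numClosedFieldType)^o.

Definition jordan_arc (R : realType) (P : set R[i]) : Prop :=
  exists g : R -> R[i],
    [/\ {within `[0, 1], continuous g},
        (forall s t : R, 0 <= s <= 1 -> 0 <= t <= 1 -> g s = g t -> s = t) &
        P = g @` `[0, 1]].

Section Kronecker.
Variables (K : fieldType) (n m : nat).

(* Greedy left-to-right selection: a vector (labelled by its column index)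
   is selected iff it is linearly independent of (i.e. not in the span of)
   the previously selected vectors; [acc] spans the selected vectors. *)
Fixpoint greedy_select (acc : 'M[K]_n) (s : seq ('I_m * 'rV[K]_n))
  : seq ('I_m * bool) :=
  match s with
  | [::] => [::]
  | p :: s' =>
      let b := ~~ (p.2 <= acc)%MS in
      (p.1, b) :: greedy_select (if b then (acc + p.2)%MS else acc) s'
  end.

Definition krylov_list (A : 'M[K]_n) (B : 'M[K]_(n, m))
  : seq ('I_m * 'rV[K]_n) :=
  flatten [seq [seq (i, (A ^+ j *m col i B)^T) | i <- enum 'I_m]
          | j <- iota 0 n].

Definition kronecker_indices (A : 'M[K]_n) (B : 'M[K]_(n, m)) : 'I_m -> nat :=
  fun i => count (fun p => (p.1 == i) && p.2)
                 (greedy_select 0 (krylov_list A B)).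

(* Offsets kappa_1 + ... + kappa_(i-1) (0-based row index of block i). *)
Definition kappa_offset (kappa : 'I_m -> nat) (i : 'I_m) : nat :=
  (\sum_(j < m | (j < i)%N) kappa j)%N.

(* A_kappa: block-diagonal lower shift matrices of sizes kappa_i. *)
Definition A_kappa (kappa : 'I_m -> nat) : 'M[K]_n :=
  \matrix_(r < n, c < n)
    if (r == c.+1 :> nat) &&
       [exists i : 'I_m, (kappa_offset kappa i <= c)%N &&
                         (c.+1 < kappa_offset kappa i + kappa i)%N]
    then 1 else 0.

Definition B_kappa (kappa : 'I_m -> nat) : 'M[K]_(n, m) :=
  \matrix_(r < n, i < m)
    if (kappa i != 0%N) && (r == kappa_offset kappa i :> nat) then 1 else 0.

End Kronecker.

Section Feedback.
Variables (R : realType) (n m : nat).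

Definition restricted_feedback_transformation (P : set R[i])
    (T : R[i] -> 'M[R[i]]_n) (F : R[i] -> 'M[R[i]]_(m, n))
    (S : R[i] -> 'M[R[i]]_m) : Prop :=
  [/\ {within P, continuous T}, {within P, continuous F},
      {within P, continuous S} &
      forall theta, P theta ->
        [/\ T theta \in unitmx,
            (forall i j : 'I_m, (j < i)%N -> S theta i j = 0) &
            (forall i : 'I_m, S theta i i = 1)]].

Definition feedback_act_A (T : 'M[R[i]]_n) (F : 'M[R[i]]_(m, n))
    (S : 'M[R[i]]_m) (A : 'M[R[i]]_n) (B : 'M[R[i]]_(n, m)) : 'M[R[i]]_n :=
  T *m (A - B *m invmx S *m F) *m invmx T.

Definition feedback_act_B (T : 'M[R[i]]_n) (S : 'M[R[i]]_m)
    (B : 'M[R[i]]_(n, m)) : 'M[R[i]]_(n, m) :=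
  T *m B *m invmx S.

End Feedback.

(* Main.v *)
Require Import Defs.
From HB Require Import structures.
From mathcomp Require Import all_boot all_order all_algebra.
From mathcomp Require Import complex.
From mathcomp Require Import all_classical all_reals all_analysis.
From mathcomp Require Import fingroup perm.
From mathcomp Require Import zify.
Import Order.TTheory GRing.Theory Num.Theory.
Import ComplexField.
Local Open Scope classical_set_scope.
Local Open Scope ring_scope.

Section Cont.
Variables (R : realType) (F : set_system R[i]).
Context {FF : Filter F}.
Variable (x : R[i]).

Lemma cv_cst (c : R[i]) : (fun _ : R[i] => c) @ F --> c.
Proof. exact: (@cvg_cst _ c _ F FF). Qed.

Lemma cv_add (f g : R[i] -> R[i]) (a b : R[i]) :
  f @ F --> a -> g @ F --> b -> (fun t => f t + g t) @ F --> a + b.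
Proof. move=> ha hb; have h := @cvgD R[i] R[i]^o _ F FF f g a b ha hb. exact: h. Qed.

Lemma cv_mul (f g : R[i] -> R[i]) (a b : R[i]) :
  f @ F --> a -> g @ F --> b -> (fun t => f t * g t) @ F --> a * b.
Proof. move=> ha hb; exact: (@cvgM _ _ F FF f g a b ha hb). Qed.

Lemma cv_inv (f : R[i] -> R[i]) (a : R[i]) : a != 0 ->
  f @ F --> a -> (fun t => (f t)^-1) @ F --> a^-1.
Proof. move=> a0 ha; exact: (@cvgV _ _ F FF f a a0 ha). Qed.


Lemma cv_sum (I : Type) (r : seq I) (Pr : pred I) (h : I -> R[i] -> R[i]) (l : I -> R[i]) :
  (forall k, h k @ F --> l k) ->
  (fun t => \sum_(k <- r | Pr k) h k t) @ F --> \sum_(k <- r | Pr k) l k.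
Proof.
move=> hk; elim: r => [|a r IH].
  have -> : (fun t => \sum_(k <- [::] | Pr k) h k t) = (fun _ => \sum_(k <- [::] | Pr k) l k).
    by apply: funext => t; rewrite !big_nil.
  exact: cv_cst.
have -> : (fun t => \sum_(k <- a :: r | Pr k) h k t) =
  (fun t => if Pr a then h a t + \sum_(k <- r | Pr k) h k t else \sum_(k <- r | Pr k) h k t).
  by apply: funext => t; rewrite big_cons.
rewrite big_cons; case: (Pr a); last exact: IH.
by apply: cv_add; [exact: hk | exact: IH].
Qed.

Lemma cv_prod (I : Type) (r : seq I) (Pr : pred I) (h : I -> R[i] -> R[i]) (l : I -> R[i]) :
  (forall k, h k @ F --> l k) ->
  (fun t => \prod_(k <- r | Pr k) h k t) @ F --> \prod_(k <- r | Pr k) l k.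
Proof.
move=> hk; elim: r => [|a r IH].
  have -> : (fun t => \prod_(k <- [::] | Pr k) h k t) = (fun _ => \prod_(k <- [::] | Pr k) l k).
    by apply: funext => t; rewrite !big_nil.
  exact: cv_cst.
have -> : (fun t => \prod_(k <- a :: r | Pr k) h k t) =
  (fun t => if Pr a then h a t * \prod_(k <- r | Pr k) h k t else \prod_(k <- r | Pr k) h k t).
  by apply: funext => t; rewrite big_cons.
rewrite big_cons; case: (Pr a); last exact: IH.
by apply: cv_mul; [exact: hk | exact: IH].
Qed.

Definition cvE p q (M : R[i] -> 'M[R[i]]_(p, q)) :=
  forall a b, (fun t => M t a b) @ F --> M x a b.
Arguments cvE {p q}.

Lemma cvE_of p q (M : R[i] -> 'M[R[i]]_(p, q)) : M @ F --> M x -> cvE M.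
Proof.
move=> h a b.
have := @continuous_cvg _ _ _ F _ M (fun N : 'M[R[i]]_(p, q) => N a b) (M x)
  (@coord_continuous _ _ _ a b (M x)) h.
exact.
Qed.

Lemma cvE_to p q (M : R[i] -> 'M[R[i]]_(p, q)) : cvE M -> M @ F --> M x.
Proof.
move=> h A [P0 hP sub].
have : \forall t \near F, forall ab : 'I_p * 'I_q, P0 ab.1 ab.2 (M t ab.1 ab.2).
  apply: filter_forall => -[a b]; exact: (h a b _ (hP a b)).
by apply: filterS => t ht; apply: sub => a b; exact: (ht (a, b)).
Qed.

Lemma cvE_cst p q (C : 'M[R[i]]_(p, q)) : cvE (fun _ => C).
Proof. move=> a b; exact: cv_cst. Qed.

Lemma cvE_mul p q r (M : R[i] -> 'M[R[i]]_(p, q)) (N : R[i] -> 'M[R[i]]_(q, r)) :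
  cvE M -> cvE N -> cvE (fun t => M t *m N t).
Proof.
move=> hM hN a b.
have -> : (fun t => (M t *m N t) a b) = (fun t => \sum_k M t a k * N t k b).
  by apply: funext => t; rewrite mxE.
rewrite mxE.
apply: (cv_sum _ _ _ (fun k t => M t a k * N t k b) (fun k => M x a k * N x k b)).
move=> k; exact: (cv_mul _ _ _ _ (hM a k) (hN k b)).
Qed.

Lemma cvE_tr p q (M : R[i] -> 'M[R[i]]_(p, q)) : cvE M -> cvE (fun t => (M t)^T).
Proof.
move=> h a b.
have -> : (fun t => (M t)^T a b) = (fun t => M t b a) by apply: funext => t; rewrite mxE.
rewrite mxE; exact: h.
Qed.

Lemma cvE_col p q (M : R[i] -> 'M[R[i]]_(p, q)) j : cvE M -> cvE (fun t => col j (M t)).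
Proof.
move=> h a b.
have -> : (fun t => col j (M t) a b) = (fun t => M t a j) by apply: funext => t; rewrite mxE.
rewrite mxE; exact: h.
Qed.

Lemma cvE_exp p (M : R[i] -> 'M[R[i]]_p) k : cvE M -> cvE (fun t => M t ^+ k).
Proof.
move=> h; elim: k => [|k IH].
  have -> : (fun t => M t ^+ 0) = (fun _ => 1) by apply: funext => t; rewrite expr0.
  exact: cvE_cst.
have -> : (fun t => M t ^+ k.+1) = (fun t => M t *m M t ^+ k).
  by apply: funext => t; rewrite exprS mulmxE.
exact: (cvE_mul _ _ _ _ _ h IH).
Qed.

Lemma cvE_scale p q (s : R[i] -> R[i]) (M : R[i] -> 'M[R[i]]_(p, q)) :
  s @ F --> s x -> cvE M -> cvE (fun t => s t *: M t).
Proof.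
move=> hs h a b.
have -> : (fun t => (s t *: M t) a b) = (fun t => s t * M t a b) by apply: funext => t; rewrite mxE.
rewrite mxE; exact: (cv_mul _ _ _ _ hs (h a b)).
Qed.

Lemma cv_det p (M : R[i] -> 'M[R[i]]_p) : cvE M ->
  (fun t => \det (M t)) @ F --> \det (M x).
Proof.
move=> h; rewrite /determinant.
apply: (cv_sum _ _ _ _ _) => s.
apply: (cv_mul _ _ _ _ (cv_cst _)).
apply: (cv_prod _ _ _ _ _) => i.
exact: h.
Qed.

Lemma cvE_adj p (M : R[i] -> 'M[R[i]]_p) : cvE M -> cvE (fun t => \adj (M t)).
Proof.
move=> h a b.
have -> : (fun t => \adj (M t) a b) =
  (fun t => (-1) ^+ (b + a) * \det (row' b (col' a (M t)))).
  by apply: funext => t; rewrite mxE.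
rewrite mxE /cofactor.
apply: (cv_mul _ _ _ _ (cv_cst _)).
apply: (cv_det _ (fun t => row' b (col' a (M t)))) => c d.
have -> : (fun t => row' b (col' a (M t)) c d) = (fun t => M t (lift b c) (lift a d)).
  by apply: funext => t; rewrite !mxE.
rewrite !mxE; exact: h.
Qed.

End Cont.

Local Close Scope classical_set_scope.
Local Close Scope ring_scope.
Set Implicit Arguments.
Unset Strict Implicit.
Unset Printing Implicit Defensive.

Section Offsets.
Variables (m n : nat) (kappa : 'I_m -> nat).
Hypothesis Hs : (\sum_(i < m) kappa i)%N = n.

Definition ps (t : nat) : nat := (\sum_(j < m | (j < t)%N) kappa j)%N.

Lemma ps0 : ps 0 = 0%N.
Proof. by rewrite /ps big1. Qed.

Lemma psS (i : 'I_m) : ps i.+1 = (ps i + kappa i)%N.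
Proof.
rewrite /ps (bigD1 i) //= addnC; congr (_ + _)%N.
by apply: eq_bigl => j; rewrite ltnS ltn_neqAle andbC.
Qed.

Lemma ps_mono t t' : (t <= t')%N -> (ps t <= ps t')%N.
Proof.
move=> tt'; rewrite /ps [X in (_ <= X)%N]big_mkcond [X in (X <= _)%N]big_mkcond.
apply: leq_sum => j _; case: ifP => //= jt.
by rewrite (leq_trans jt tt').
Qed.

Lemma psm : ps m = n.
Proof. by rewrite /ps -Hs; apply: eq_bigl => j; rewrite ltn_ord. Qed.

Lemma off_ps (i : 'I_m) : kappa_offset kappa i = ps i.
Proof. by []. Qed.

Definition inblk (i : 'I_m) (r : nat) : bool :=
  (kappa_offset kappa i <= r < kappa_offset kappa i + kappa i)%N.

Lemma offO1 (i : 'I_m) : (kappa_offset kappa i + kappa i <= n)%N.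
Proof. by rewrite off_ps -psS -psm ps_mono. Qed.

Lemma offO2 (i i' : 'I_m) : (i < i')%N ->
  (kappa_offset kappa i + kappa i <= kappa_offset kappa i')%N.
Proof. by move=> ii'; rewrite !off_ps -psS ps_mono. Qed.

Lemma offO3 (r : nat) : (r < n)%N -> exists i, inblk i r.
Proof.
move=> rn.
suff H : forall t, (t <= m)%N -> (r < ps t)%N -> exists i, inblk i r.
  by apply: (H m) => //; rewrite psm.
elim=> [|t IH] tm; first by rewrite ps0.
have tm' : (t < m)%N by [].
have := psS (Ordinal tm'); rewrite /= => ->.
case: (ltnP r (ps t)) => hr. { have := IH (ltnW tm) hr. exact. }
move=> hr2; exists (Ordinal tm'); by rewrite /inblk off_ps /= hr hr2.
Qed.

Lemma offO4 (i i' : 'I_m) (r : nat) : inblk i r -> inblk i' r -> i = i'.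
Proof.
rewrite /inblk => /andP[h1 h2] /andP[h3 h4].
case: (ltngtP i i') => [lt|lt|/val_inj //].
  have := offO2 lt; lia.
have := offO2 lt; lia.
Qed.

Lemma inblk_lt (i : 'I_m) r : inblk i r -> (r < n)%N.
Proof. by move=> /andP[_ h]; apply: leq_trans h (offO1 i). Qed.

Lemma inblk_kappa (i : 'I_m) r : inblk i r -> (0 < kappa i)%N.
Proof. clear Hs. rewrite /inblk; lia. Qed.

Lemma inblk_off (i : 'I_m) : (0 < kappa i)%N -> inblk i (kappa_offset kappa i).
Proof. clear Hs. rewrite /inblk; lia. Qed.

Lemma inblk_last (i : 'I_m) : (0 < kappa i)%N ->
  inblk i (kappa_offset kappa i + kappa i - 1).
Proof. clear Hs. rewrite /inblk; lia. Qed.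

Lemma inblk_add (i : 'I_m) k : (k < kappa i)%N -> inblk i (kappa_offset kappa i + k).
Proof. clear Hs. rewrite /inblk; lia. Qed.

Lemma kappa_le (i : 'I_m) : (kappa i <= n)%N.
Proof. have := offO1 i; lia. Qed.

Definition blk (r : 'I_n) : 'I_m := xchoose (offO3 (ltn_ord r)).

Lemma blkP (r : 'I_n) : inblk (blk r) r.
Proof. exact: (xchooseP (offO3 (ltn_ord r))). Qed.

Lemma blk_eq (r : 'I_n) i : inblk i r -> blk r = i.
Proof. by move=> h; apply: offO4 (blkP r) h. Qed.

End Offsets.

Local Open Scope ring_scope.

Section Greedy.
Variables (K : fieldType) (n m : nat).

Fixpoint spS (t : seq ('I_m * 'rV[K]_n)) : 'M[K]_n :=
  match t with [::] => 0 | q :: t' => (q.2 + spS t')%MS end.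

Lemma spS_sub (t : seq ('I_m * 'rV[K]_n)) k (X : 'M[K]_(k, n)) :
  (forall q, q \in t -> (q.2 <= X)%MS) -> (spS t <= X)%MS.
Proof.
elim: t => [|q t IH] H /=; first exact: sub0mx.
rewrite addsmx_sub H ?mem_head //=; apply: IH => q' q't.
by apply: H; rewrite inE q't orbT.
Qed.

Lemma mem_spS (t : seq ('I_m * 'rV[K]_n)) q : q \in t -> (q.2 <= spS t)%MS.
Proof.
elim: t => [//|q' t IH]; rewrite inE => /orP[/eqP ->|qt] /=.
  exact: addsmxSl.
exact: submx_trans (IH qt) (addsmxSr _ _).
Qed.

Lemma greedy_size (s : seq ('I_m * 'rV[K]_n)) acc :
  size (greedy_select acc s) = size s.
Proof. by elim: s acc => [|q s IH] acc //=; rewrite IH. Qed.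

Lemma greedy_nth (s : seq ('I_m * 'rV[K]_n)) (acc : 'M[K]_n) p d dg :
  (p < size s)%N ->
  nth dg (greedy_select acc s) p =
  ((nth d s p).1, ~~ ((nth d s p).2 <= acc + spS (take p s))%MS).
Proof.
elim: s acc p => [//|q s IH] acc [|p] /= ps.
  by rewrite addsmx0.
rewrite IH //; congr (_, ~~ _).
case: ifP => hb.
  by rewrite addsmxA.
move/negbFE: hb => hq.
by rewrite addsmxA (adds_eqmx (addsmx_idPl hq) (eqmx_refl _)).
Qed.

Lemma greedy_rank (s : seq ('I_m * 'rV[K]_n)) (acc : 'M[K]_n) :
  \rank (acc + spS s)%MS = (\rank acc + count snd (greedy_select acc s))%N.
Proof.
elim: s acc => [|q s IH] acc /=; first by rewrite addsmx0 addn0.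
case: ifP => hb /=.
  rewrite addsmxA IH addnA; congr (_ + _)%N.
  apply/eqP; rewrite eqn_leq; apply/andP; split.
    apply: leq_trans (mxrank_adds_leqif acc q.2) _.
    by rewrite leq_add2l rank_leq_row.
  have : (acc < acc + q.2)%MS by rewrite ltmxE addsmxSl addsmx_sub submx_refl hb.
  by rewrite ltmxErank addn1 => /andP[].
move/negbFE: hb => hq.
by rewrite addsmxA (adds_eqmx (addsmx_idPl hq) (eqmx_refl _)) IH add0n.
Qed.

Lemma count_split (X : Type) (s : seq ('I_m * X)) (a : pred ('I_m * X)) :
  count a s = (\sum_(l < m) count (fun p => (p.1 == l) && a p) s)%N.
Proof.
elim: s => [|q s IH] /=; first by rewrite big1.
rewrite big_split /= IH; congr (_ + _)%N.
rewrite (bigD1 q.1) //= eqxx /= big1 ?addn0 // => l /negPf.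
by rewrite eq_sym => ->.
Qed.

End Greedy.

Lemma nth_flat (T : Type) (d : T) (f : nat -> seq T) (m : nat) :
  (forall j, size (f j) = m) -> forall c a p, (p < c * m)%N ->
  nth d (flatten [seq f j | j <- iota a c]) p = nth d (f (a + p %/ m)%N) (p %% m).
Proof.
move=> hs; elim=> [|c IH] a p //= hp.
rewrite nth_cat hs.
have m0 : (0 < m)%N by move: hp; rewrite mulSn; case: m {hs IH} => //; lia.
case: ltnP => hpm.
  by rewrite divn_small // modn_small // addn0.
rewrite IH; last by move: hp; rewrite mulSn; lia.
have -> : p = (1 * m + (p - m))%N by lia.
rewrite divnMDl // modnMDl.
have e : (1 * m + (p - m) - m = p - m)%N by lia.
rewrite e; congr (nth _ (f _) _); lia.
Qed.

Lemma size_flat (T : Type) (f : nat -> seq T) (m : nat) :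
  (forall j, size (f j) = m) -> forall c a,
  size (flatten [seq f j | j <- iota a c]) = (c * m)%N.
Proof.
move=> hs; elim=> [|c IH] a //=.
by rewrite size_cat hs IH mulSn.
Qed.

Section Krylov.
Variables (K : fieldType) (n m : nat) (A : 'M[K]_n) (B : 'M[K]_(n, m)).

Definition xv (k : nat) (l : 'I_m) : 'rV[K]_n := (A ^+ k *m col l B)^T.

Let L := krylov_list A B.

Lemma size_L : size L = (n * m)%N.
Proof.
rewrite /L /krylov_list (@size_flat _ _ m) //.
by move=> j; rewrite size_map size_enum_ord.
Qed.

Lemma nth_L p d : (p < n * m)%N ->
  exists l : 'I_m, val l = (p %% m)%N /\ nth d L p = (l, xv (p %/ m) l).
Proof.
move=> hp.
have m0 : (0 < m)%N by case: m hp => //; lia.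
rewrite /L /krylov_list (@nth_flat _ _ _ m) //; last first.
  by move=> j; rewrite size_map size_enum_ord.
exists (Ordinal (ltn_pmod p m0)); split => //.
rewrite (nth_map (Ordinal (ltn_pmod p m0))); last by rewrite size_enum_ord ltn_pmod.
by rewrite (nth_ord_enum _ (Ordinal (ltn_pmod p m0))).
Qed.

Lemma nth_Lkl (k : nat) (l : 'I_m) d : (k < n)%N ->
  nth d L (k * m + l) = (l, xv k l).
Proof.
move=> kn.
have hp : (k * m + l < n * m)%N by have := ltn_ord l; nia.
have m0 : (0 < m)%N by case: m l {hp} => [[]|].
have [l' [hl' ->]] := nth_L d hp.
rewrite divnMDl // modnMDl in hl' *.
rewrite divn_small ?addn0 //; congr (_, _).
  by apply: val_inj; rewrite hl' modn_small.
by have -> : l' = l by apply: val_inj; rewrite hl' modn_small.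
Qed.

Lemma mem_takeL p q : q \in take p L ->
  exists k (l : 'I_m), [/\ (k < n)%N, (k * m + l < p)%N & q = (l, xv k l)].
Proof.
move=> /(nthP q) [j]; rewrite size_take size_L => hj.
have hj1 : (j < p)%N by move: hj; case: ifP => //; lia.
have hj2 : (j < n * m)%N by move: hj; case: ifP => //; lia.
rewrite nth_take // => hq.
have [l [hl hn]] := nth_L q hj2.
have m0 : (0 < m)%N by case: m l {hl hn hq hj hj2} => [[]|].
exists (j %/ m)%N, l; split.
- by rewrite ltn_divLR.
- by rewrite hl -divn_eq.
- by rewrite -hq hn.
Qed.

Lemma in_takeL p (k : nat) (l : 'I_m) : (k < n)%N -> (k * m + l < p)%N ->
  (l, xv k l) \in take p L.
Proof.
move=> kn hp.
have hs : (k * m + l < n * m)%N by have := ltn_ord l; nia.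
apply/(nthP (l, xv k l)); exists (k * m + l)%N.
  by rewrite size_take size_L; case: ifP => //; lia.
by rewrite nth_take // nth_Lkl.
Qed.

End Krylov.

Lemma seg_lemma (f : nat -> bool) N :
  (forall k, (k.+1 < N)%N -> ~~ f k -> ~~ f k.+1) ->
  forall k, (k < N)%N -> f k = (k < \sum_(0 <= j < N) f j)%N.
Proof.
elim: N => [//|N IH] hm k kN.
have hm' : forall k, (k.+1 < N)%N -> ~~ f k -> ~~ f k.+1.
  by move=> k' hk; apply: hm; apply: ltn_trans hk _.
rewrite big_nat_recr //=.
have cle : (\sum_(0 <= j < N) f j <= N)%N.
  have : (\sum_(0 <= j < N) f j <= \sum_(0 <= j < N) 1)%N.
    by apply: leq_sum => j _; exact: leq_b1.
  by rewrite sum_nat_const_nat muln1 subn0.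
case fN: (f N).
  have allt : forall j, (j <= N)%N -> f j.
    move=> j jN; apply/negP => /negP hj.
    suff H : forall i, (j + i <= N)%N -> ~~ f (j + i)%N.
      by have := H (N - j)%N; rewrite subnKC // fN => /(_ (leqnn N)).
    elim=> [|i IHi] hi; first by rewrite addn0.
    by rewrite addnS; apply: hm; [lia| apply: IHi; lia].
  have -> : (\sum_(0 <= j < N) f j = N)%N.
    rewrite (eq_big_nat _ _ (F2 := fun _ => 1%N)) ?sum_nat_const_nat ?muln1 ?subn0 //.
    by move=> j /andP[_ jN]; rewrite allt // ltnW.
  by rewrite addn1 kN; apply: allt; rewrite -ltnS.
rewrite addn0.
case: (ltngtP k N) => [kN'|kN'|ek].
- exact: (IH hm' k kN').
- by exfalso; move: kN kN'; lia.
- rewrite ek fN; apply/esym/negbTE; rewrite -leqNgt; exact: cle.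
Qed.

Lemma perm_key_id n (f : 'I_n -> nat) (s : 'S_n) :
  injective f -> (forall r, f r <= f (s r))%N -> s = 1%g.
Proof.
move=> finj hle.
have e : (\sum_r f (s r) = \sum_r f r)%N.
  by rewrite [RHS](reindex_inj (@perm_inj _ s)).
have h0 : (\sum_r (f (s r) - f r) == 0)%N by rewrite sumnB // e subnn.
move: h0; rewrite sum_nat_eq0 => /forallP h.
apply/permP => r; rewrite perm1; apply: finj.
have := h r; rewrite /= subn_eq0 => h1; apply/eqP; rewrite eqn_leq h1 hle.
done.
Qed.

Lemma col_mulmx (R : pzRingType) p q r (M : 'M[R]_(p, q)) (N : 'M[R]_(q, r)) j :
  col j (M *m N) = M *m col j N.
Proof. by apply/matrixP => a b; rewrite !mxE; apply: eq_bigr => k _; rewrite !mxE. Qed.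

Lemma mxE_sub (R : pzRingType) p q (X Y : 'M[R]_(p, q)) i j :
  (X - Y) i j = X i j - Y i j.
Proof. by rewrite !mxE. Qed.

Section Main.
Variables (K : fieldType) (n m : nat) (kappa : 'I_m -> nat).
Variables (A : 'M[K]_n) (B : 'M[K]_(n, m)).
Hypothesis Hs : (\sum_(i < m) kappa i)%N = n.
Hypothesis Hk : forall l, kronecker_indices A B l = kappa l.

Local Notation L := (krylov_list A B).
Local Notation x := (xv A B).
Local Notation off := (kappa_offset kappa).

Definition sel k (l : 'I_m) : bool :=
  ~~ (x k l <= spS (take (k * m + l) L))%MS.

Lemma KI l : kronecker_indices A B l = (\sum_(0 <= k < n) sel k l)%N.
Proof.
rewrite /kronecker_indices.
set g := greedy_select 0 L.
pose dg := (l, false).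
rewrite -(mkseq_nth dg g) /g greedy_size size_L /mkseq count_map.
suff H : forall k, (k <= n)%N ->
  count (preim (nth dg (greedy_select 0 L)) (fun p => (p.1 == l) && p.2))
        (iota 0 (k * m)) = (\sum_(0 <= k' < k) sel k' l)%N by exact: H.
elim=> [|k IHk] kn; first by rewrite big_nil.
rewrite mulSn addnC iotaD count_cat IHk ?(ltnW kn) // big_nat_recr //= add0n.
congr (_ + _)%N.
have -> : iota (k * m) m = map (addn (k * m)) (iota 0 m) by rewrite -iotaDl addn0.
rewrite count_map.
have -> : iota 0 m = map val (enum 'I_m) by rewrite val_enum_ord.
rewrite count_map.
have eq : forall j : 'I_m, ((preim (nth dg (greedy_select 0 L))
      (fun p => (p.1 == l) && p.2) \o addn (k * m)) \o val) j = (j == l) && sel k l.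
  move=> j /=.
  have hj : (k * m + j < size L)%N by rewrite size_L; have := ltn_ord j; nia.
  rewrite (greedy_nth 0 (l, x 0 l)) //= nth_Lkl //=.
  rewrite /sel; case: eqP => [->|] //=.
  by rewrite adds0mx.
rewrite (eq_count eq).
case: (sel k l); last by rewrite (eq_count (a2 := pred0)) ?count_pred0 // => j; rewrite andbF.
rewrite (eq_count (a2 := pred1 l)); last by move=> j; rewrite andbT.
by rewrite count_uniq_mem ?enum_uniq ?mem_enum.
Qed.


Lemma spS_mulr (t : seq ('I_m * 'rV[K]_n)) p (C : 'M[K]_n) (X : 'M[K]_(p, n)) :
  (forall q, q \in t -> (q.2 *m C <= X)%MS) -> (spS t *m C <= X)%MS.
Proof.
elim: t => [|q t IH] H /=; first by rewrite mul0mx sub0mx.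
rewrite addsmxMr addsmx_sub H ?mem_head //=; apply: IH => q' q't.
by apply: H; rewrite inE q't orbT.
Qed.

Lemma xvS k l : x k.+1 l = x k l *m A^T.
Proof. by rewrite /xv exprS -mulmxE -mulmxA trmx_mul. Qed.

Lemma MONO k l : (k.+1 < n)%N -> ~~ sel k l -> ~~ sel k.+1 l.
Proof.
rewrite /sel !negbK => kn h.
rewrite xvS; apply: submx_trans (submxMr _ h) _.
apply: spS_mulr => q /mem_takeL [k' [l' [k'n hk' ->]]] /=.
rewrite -xvS; apply: mem_spS (l', x k'.+1 l') _.
apply: in_takeL; have := ltn_ord l; have := ltn_ord l'; nia.
Qed.

Lemma SEL k l : (k < n)%N -> sel k l = (k < kappa l)%N.
Proof.
move=> kn; rewrite -Hk KI.
apply: (@seg_lemma (fun k => sel k l)) => // k'.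
exact: MONO.
Qed.


Lemma IND p (X : 'M[K]_(p, n)) t :
  (forall k (l : 'I_m), (k < n)%N -> (k * m + l < t)%N -> (k < kappa l)%N -> (x k l <= X)%MS) ->
  forall k (l : 'I_m), (k < n)%N -> (k * m + l < t)%N -> (x k l <= X)%MS.
Proof.
move=> hb.
suff H : forall N k (l : 'I_m), (k * m + l < N)%N -> (k < n)%N -> (k * m + l < t)%N -> (x k l <= X)%MS.
  by move=> k l; apply: H.
elim=> [//|N IH] k l hN kn kt.
case: (ltnP (k * m + l) N) => hkN; first exact: IH.
case hs: (k < kappa l)%N; first exact: hb.
have : ~~ sel k l by rewrite SEL // hs.
rewrite /sel negbK => hx; apply: submx_trans hx _.
apply: spS_sub => q /mem_takeL [k' [l' [k'n hk' ->]]] /=.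
apply: IH => //; lia.
Qed.

Definition Umat : 'M[K]_n :=
  \matrix_(r < n, c < n) x (r - off (blk Hs r)) (blk Hs r) 0 c.

Lemma rowU (r : 'I_n) i : inblk kappa i r -> row r Umat = x (r - off i) i.
Proof.
move=> h; have e := blk_eq Hs h.
by apply/rowP => c; rewrite !mxE e.
Qed.

Lemma xv_rowU (l : 'I_m) k (h : (off l + k < n)%N) : (k < kappa l)%N ->
  x k l = row (Ordinal h) Umat.
Proof.
move=> kl; rewrite (@rowU (Ordinal h) l) /=; last exact: inblk_add.
by rewrite addKn.
Qed.

Lemma xv_subU k l : (k < n)%N -> (x k l <= Umat)%MS.
Proof.
move=> kn.
have : (k * m + l < n * m)%N by have := ltn_ord l; nia.
move: kn; apply: IND => k' l' _ _ hk.
have h : (off l' + k' < n)%N by apply: (inblk_lt Hs); exact: inblk_add.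
rewrite (xv_rowU h) //; exact: row_sub.
Qed.

Lemma U_unit : Umat \in unitmx.
Proof.
rewrite -row_free_unit /row_free eqn_leq rank_leq_row /=.
have hr : \rank (spS L) = n.
  have := greedy_rank L 0; rewrite adds0mx mxrank0 add0n => ->.
  rewrite (count_split (m := m)); rewrite -[RHS]Hs; apply: eq_bigr => l _; by rewrite -Hk.
rewrite -{1}hr; apply: mxrankS; apply: spS_sub => q.
rewrite -[L]take_size => /mem_takeL [k [l [kn _ ->]]] /=.
exact: xv_subU.
Qed.


Definition Pmat : 'M[K]_n := (\det Umat)^-1 *: \adj Umat.

Lemma UPm : Umat *m Pmat = 1%:M.
Proof.
rewrite /Pmat -scalemxAr mul_mx_adj scale_scalar_mx mulVf //.
by have := U_unit; rewrite unitmxE unitfE.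
Qed.

Definition ev (i : 'I_m) : 'cV[K]_n :=
  \col_(c < n) ((c == (off i + kappa i - 1)%N :> nat)%:R).

Definition qv (i : 'I_m) : 'cV[K]_n := Pmat *m ev i.

Lemma rowUq (r : 'I_n) i : row r Umat *m qv i = row r (ev i).
Proof. by rewrite /qv mulmxA -row_mul UPm -row_mul mul1mx. Qed.

Lemma KILL i k (l : 'I_m) : (0 < kappa i)%N -> (k < n)%N ->
  (k * m + l < (kappa i - 1) * m + i)%N -> x k l *m qv i = 0.
Proof.
move=> ki kn hk; apply/eqP; rewrite -sub_kermx.
move: kn hk; apply: IND => k' l' k'n hk' hkl.
have h : (off l' + k' < n)%N by apply: (inblk_lt Hs); exact: inblk_add.
rewrite (xv_rowU h) // sub_kermx rowUq; apply/eqP/rowP => j.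
rewrite !mxE /=; case: eqP => // he.
have bi : inblk kappa i (off l' + k') by rewrite /inblk he; lia.
have e := offO4 Hs (inblk_add hkl) bi.
move: he hk'; rewrite e; lia.
Qed.

Lemma NORM i : (0 < kappa i)%N -> x (kappa i - 1) i *m qv i = 1.
Proof.
move=> ki.
have h : (off i + (kappa i - 1) < n)%N by apply: (inblk_lt Hs); apply: inblk_add; lia.
rewrite (xv_rowU h); last lia.
rewrite rowUq; apply/rowP => j; rewrite !mxE /= ord1 eqxx /=.
by case: eqP => //; lia.
Qed.


Lemma ent_row p q (M : 'M[K]_(p, q)) (r : 'I_p) c : M r c = (row r M) 0 c.
Proof. by rewrite mxE. Qed.

Lemma PAIR i k (l : 'I_m) : (qv i)^T *m A ^+ k *m col l B = (x k l *m qv i)^T.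
Proof. by rewrite [RHS]trmx_mul /xv trmxK mulmxA. Qed.

Lemma E1 i k (l : 'I_m) : ((qv i)^T *m A ^+ k *m B) 0 l = (x k l *m qv i) 0 0.
Proof.
have -> : ((qv i)^T *m A ^+ k *m B) 0 l = (col l ((qv i)^T *m A ^+ k *m B)) 0 0.
  by rewrite [RHS]mxE.
by rewrite col_mulmx PAIR mxE.
Qed.

Definition Tmat : 'M[K]_n :=
  \matrix_(r < n, c < n) ((qv (blk Hs r))^T *m
      A ^+ (kappa (blk Hs r) - 1 - (r - off (blk Hs r)))) 0 c.

Lemma rowT (r : 'I_n) i : inblk kappa i r ->
  row r Tmat = (qv i)^T *m A ^+ (kappa i - 1 - (r - off i)).
Proof.
move=> h; have e := blk_eq Hs h.
by apply/rowP => c; rewrite !mxE e.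
Qed.

Definition Smat : 'M[K]_m :=
  \matrix_(i < m, l < m) if kappa i != 0%N
     then ((qv i)^T *m A ^+ (kappa i - 1) *m B) 0 l else (i == l)%:R.

Definition Fmat : 'M[K]_(m, n) :=
  \matrix_(i < m, c < n) \sum_(r < n)
     (((kappa i != 0%N) && (r == off i :> nat))%:R * (Tmat *m A) r c).

Lemma S_up (i l : 'I_m) : (l < i)%N -> Smat i l = 0.
Proof.
move=> li; rewrite mxE; case: ifP => k0.
  have ki : (0 < kappa i)%N by rewrite lt0n.
  rewrite E1 KILL //; first by rewrite mxE.
  - have := kappa_le Hs i; lia.
  - lia.
have -> : (i == l) = false by apply/negbTE/eqP => e; move: li; rewrite e ltnn.
by [].
Qed.

Lemma S_diag (i : 'I_m) : Smat i i = 1.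
Proof.
rewrite mxE; case: ifP => k0; last by rewrite eqxx.
by rewrite E1 NORM ?mxE ?eqxx //; lia.
Qed.

Lemma S_unit : Smat \in unitmx.
Proof.
rewrite unitmxE -det_tr det_trig.
  by rewrite big1 ?unitr1 // => i _; rewrite mxE S_diag.
by apply/is_trig_mxP => i j ij; rewrite mxE S_up.
Qed.

Lemma Bkr (r : 'I_n) i i' : inblk kappa i r ->
  @B_kappa K n m kappa r i' = if (i' == i) && (r == off i :> nat) then 1 else 0.
Proof.
move=> h; rewrite mxE.
have [->|ne] := eqVneq i' i; rewrite /=.
  by have := inblk_kappa h; case: (kappa i) => //.
case: ifP => // /andP[k0 /eqP e]; exfalso; move/eqP: ne; apply.
apply: (offO4 Hs _ h); rewrite e; apply: inblk_off; rewrite lt0n.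
exact: k0.
Qed.

Lemma BkS (r : 'I_n) i p (Y : 'M[K]_(m, p)) c : inblk kappa i r ->
  (@B_kappa K n m kappa *m Y) r c = if (r == off i :> nat) then Y i c else 0.
Proof.
move=> h; rewrite mxE (bigD1 i) //= big1 => [|i' ne].
  by rewrite (Bkr _ h) eqxx /=; case: ifP; rewrite ?mul1r ?mul0r addr0.
by rewrite (Bkr _ h) (negbTE ne) mul0r.
Qed.

Lemma TB : Tmat *m B = @B_kappa K n m kappa *m Smat.
Proof.
apply/matrixP => r l.
have [i hi] := offO3 Hs (ltn_ord r).
rewrite (BkS _ _ hi) [LHS]ent_row row_mul (rowT hi) E1.
case: eqP => e.
  have k0 : (kappa i != 0%N) by rewrite -lt0n (inblk_kappa hi).
  by rewrite [RHS]mxE k0 E1 e subnn subn0.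
have ki := inblk_kappa hi.
rewrite KILL //; first by rewrite mxE.
  have := kappa_le Hs i; lia.
move: hi e; rewrite /inblk => hi e.
have := ltn_ord l; have := ltn_ord i; nia.
Qed.


Lemma Akr (r r' : 'I_n) i : inblk kappa i r ->
  @A_kappa K n m kappa r r' =
    if (r' == (r - 1)%N :> nat) && (off i < r)%N then 1 else 0.
Proof.
move=> h; rewrite mxE.
have [e|ne] := eqVneq (r : nat) r'.+1; last first.
  rewrite /=; case: ifP => // /andP[/eqP e2 h2]; exfalso; move: ne; rewrite e2; lia.
rewrite e /= subn1 /= eqxx /=.
case: (boolP [exists _, _]) => [/existsP [i'' /andP [h1 h2]]|/existsPn hn].
  have bi : inblk kappa i'' r by rewrite /inblk e; lia.
  have ei := offO4 Hs bi h; rewrite -ei.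
  by have -> : (off i'' < r'.+1)%N by lia.
case: ifP => // hl; exfalso; have := hn i; move: h hl; rewrite /inblk e; lia.
Qed.

Lemma TA : Tmat *m A - @A_kappa K n m kappa *m Tmat = @B_kappa K n m kappa *m Fmat.
Proof.
apply/matrixP => r c.
have [i hi] := offO3 Hs (ltn_ord r).
rewrite mxE_sub (BkS _ _ hi).
have hTA : (Tmat *m A) r c = ((qv i)^T *m A ^+ (kappa i - 1 - (r - off i)).+1) 0 c.
  by rewrite [LHS]ent_row row_mul (rowT hi) -mulmxA exprSr mulmxE.
case: eqP => e.
  rewrite [X in _ - X]mxE big1 => [|r' _]; last first.
    by rewrite (Akr _ hi) e ltnn andbF mul0r.
  rewrite subr0 [RHS]mxE (bigD1 r) //= e eqxx /=.
  have -> : (kappa i != 0%N) by have := inblk_kappa hi; case: (kappa i).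
  rewrite mul1r big1 ?addr0 // => r' ne.
  have -> : (r' == off i :> nat) = false.
    by apply/negP => /eqP e'; move/eqP: ne; apply; apply: val_inj; rewrite /= e e'.
  by rewrite andbF mul0r.
have hr : (r - 1 < n)%N by have := ltn_ord r; lia.
have hlt : (off i < r)%N by move: hi e; rewrite /inblk; lia.
rewrite [X in _ - X]mxE (bigD1 (Ordinal hr)) //= (Akr _ hi) /= eqxx hlt mul1r.
rewrite big1 ?addr0 => [|r' ne]; last first.
  rewrite (Akr _ hi); case: ifP; rewrite ?mul0r // => /andP[/eqP e' _].
  by exfalso; move: ne; rewrite -val_eqE /= e' eqxx.
have hi' : inblk kappa i (r - 1) by move: hi hlt; rewrite /inblk; lia.
rewrite hTA (ent_row Tmat) (@rowT (Ordinal hr) i hi') /=.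
have -> : (kappa i - 1 - (r - 1 - off i) = (kappa i - 1 - (r - off i)).+1)%N.
  by move: hi hlt; rewrite /inblk; lia.
by rewrite subrr.
Qed.

Lemma TU_entry (r c : 'I_n) i l : inblk kappa i r -> inblk kappa l c ->
  (Tmat *m Umat^T) r c =
  (x (kappa i - 1 - (r - off i) + (c - off l)) l *m qv i) 0 0.
Proof.
move=> hi hl.
have -> : (Tmat *m Umat^T) r c = (row r Tmat *m (row c Umat)^T) 0 0.
  by rewrite !mxE; apply: eq_bigr => k _; rewrite !mxE.
have tr11 : forall M : 'M[K]_1, M 0 0 = M^T 0 0 by move=> M; rewrite mxE.
rewrite (rowT hi) (rowU hl) [RHS]tr11 -PAIR exprD -mulmxE /xv trmxK !mulmxA.
done.
Qed.

Definition key (r : 'I_n) : nat := ((r - off (blk Hs r)) * m + blk Hs r)%N.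

Lemma key_inj : injective key.
Proof.
move=> r r'; rewrite /key => e.
have m0 : (0 < m)%N by case: m (blk Hs r) {e} => [[]|].
have e1 := congr1 (fun t => t %% m)%N e.
have e2 := congr1 (fun t => t %/ m)%N e.
move: e1 e2 => /=; rewrite !modnMDl !divnMDl // !modn_small // !divn_small // !addn0.
move=> e1 e2.
have eb : blk Hs r = blk Hs r' by apply: val_inj.
have := blkP Hs r; have := blkP Hs r'; rewrite -eb /inblk => h1 h2.
apply: ord_inj; move: e2; rewrite -eb; lia.
Qed.

Lemma T_unit : Tmat \in unitmx.
Proof.
suff : (Tmat *m Umat^T) \in unitmx by rewrite unitmx_mul => /andP[].
rewrite unitmxE.
suff -> : \det (Tmat *m Umat^T) = 1 by exact: unitr1.
rewrite /determinant (bigD1 1%g) //= [X in _ + X]big1 => [|s ne].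
  rewrite odd_perm1 expr0 mul1r big1 ?addr0 // => r _.
  have hi := blkP Hs r; rewrite perm1 (TU_entry hi hi).
  have -> : (kappa (blk Hs r) - 1 - (r - off (blk Hs r)) + (r - off (blk Hs r)) = kappa (blk Hs r) - 1)%N.
    by move: hi; rewrite /inblk; lia.
  by rewrite NORM ?mxE //; move: hi; rewrite /inblk; lia.
have [r hr] : exists r, (key (s r) < key r)%N.
  case: (boolP [exists r, key (s r) < key r]%N) => [/existsP //|/existsPn h].
  exfalso; move/eqP: ne; apply; apply: (perm_key_id key_inj) => r.
  by have := h r; rewrite -leqNgt.
have z : (Tmat *m Umat^T) r (s r) = 0.
  have hi := blkP Hs r; have hl := blkP Hs (s r).
  have ki := inblk_kappa hi.
  rewrite (TU_entry hi hl) KILL ?mxE //.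
    move: hr hi hl; rewrite /key /inblk.
    have := ltn_ord (blk Hs r); have := ltn_ord (blk Hs (s r)); have := kappa_le Hs (blk Hs r); nia.
  move: hr hi hl; rewrite /key /inblk.
  have := ltn_ord (blk Hs r); have := ltn_ord (blk Hs (s r)); nia.
by rewrite (bigD1 r) //= z mul0r mulr0.
Qed.

End Main.

Local Open Scope classical_set_scope.

Unset Implicit Arguments.
Set Strict Implicit.

Section ContMain.
Variables (R : realType) (F : set_system R[i]).
Context {FF : Filter F}.
Variables (x : R[i]) (n m : nat) (kappa : 'I_m -> nat).
Variables (A : R[i] -> 'M[R[i]]_n) (B : R[i] -> 'M[R[i]]_(n, m)).
Hypothesis hS : (\sum_(i < m) kappa i)%N = n.
Hypothesis hA : @cvE R F x _ _ A.
Hypothesis hB : @cvE R F x _ _ B.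
Hypothesis hdet : \det (Umat (A x) (B x) hS) != 0.

Lemma cvE_xv k l : @cvE R F x _ _ (fun t => xv (A t) (B t) k l).
Proof.
apply: cvE_tr; apply: cvE_mul; [exact: cvE_exp | exact: cvE_col].
Qed.

Lemma cvE_U : @cvE R F x _ _ (fun t => Umat (A t) (B t) hS).
Proof.
move=> a b.
have -> : (fun t => Umat (A t) (B t) hS a b) =
  (fun t => xv (A t) (B t) (a - kappa_offset kappa (blk hS a)) (blk hS a) 0 b).
  by apply: funext => t; rewrite mxE.
rewrite mxE; exact: cvE_xv.
Qed.

Lemma cvE_P : @cvE R F x _ _ (fun t => Pmat (A t) (B t) hS).
Proof.
apply: cvE_scale; last exact: cvE_adj cvE_U.
apply: cv_inv => //; exact: cv_det cvE_U.
Qed.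

Lemma cvE_q i : @cvE R F x _ _ (fun t => qv (A t) (B t) hS i).
Proof. apply: cvE_mul; [exact: cvE_P | exact: cvE_cst]. Qed.

Lemma cvE_T : @cvE R F x _ _ (fun t => Tmat (A t) (B t) hS).
Proof.
move=> a b.
have -> : (fun t => Tmat (A t) (B t) hS a b) =
  (fun t => ((qv (A t) (B t) hS (blk hS a))^T *m A t ^+ (kappa (blk hS a) - 1 - (a - kappa_offset kappa (blk hS a)))) 0 b).
  by apply: funext => t; rewrite mxE.
rewrite mxE; apply: cvE_mul; [exact: cvE_tr (cvE_q _) | exact: cvE_exp].
Qed.

Lemma cvE_S : @cvE R F x _ _ (fun t => Smat (A t) (B t) hS).
Proof.
move=> a b.
have -> : (fun t => Smat (A t) (B t) hS a b) =
  (fun t => if kappa a != 0%N then ((qv (A t) (B t) hS a)^T *m A t ^+ (kappa a - 1) *m B t) 0 b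
            else (a == b)%:R).
  by apply: funext => t; rewrite mxE.
rewrite mxE; case: ifP => _; last exact: cv_cst.
apply: cvE_mul; last exact: hB.
apply: cvE_mul; [exact: cvE_tr (cvE_q _) | exact: cvE_exp].
Qed.

Lemma cvE_F : @cvE R F x _ _ (fun t => Fmat (A t) (B t) hS).
Proof.
move=> a b.
have -> : (fun t => Fmat (A t) (B t) hS a b) =
  (fun t => \sum_(r < n) (((kappa a != 0%N) && (r == kappa_offset kappa a :> nat))%:R
       * (Tmat (A t) (B t) hS *m A t) r b)).
  by apply: funext => t; rewrite mxE.
rewrite mxE; apply: (cv_sum _ _ _ _ _ _ _) => r.
apply: (cv_mul _ _ _ _ _ _ (cv_cst _ _ _)).
apply: cvE_mul; [exact: cvE_T | exact: hA].
Qed.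

End ContMain.

Theorem mainTheorem1 (R : realType) (n m : nat) (P : set R[i])
    (A : R[i] -> 'M[R[i]]_n) (B : R[i] -> 'M[R[i]]_(n, m))
    (kappa : 'I_m -> nat) :
  jordan_arc P ->
  {within P, continuous A} ->
  {within P, continuous B} ->
  (forall theta, P theta -> forall i : 'I_m, kronecker_indices (A theta) (B theta) i = kappa i) ->
  (\sum_(i < m) kappa i)%N = n ->
  exists (T : R[i] -> 'M[R[i]]_n) (F : R[i] -> 'M[R[i]]_(m, n))
         (S : R[i] -> 'M[R[i]]_m),
    restricted_feedback_transformation P T F S /\
    forall theta, P theta ->
      feedback_act_A (T theta) (F theta) (S theta) (A theta) (B theta)
        = @A_kappa R[i] n m kappa /\
      feedback_act_B (T theta) (S theta) (B theta) = @B_kappa R[i] n m kappa.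
Proof.
move=> _ cA cB hK hS.
exists (fun t => Tmat (A t) (B t) hS), (fun t => Fmat (A t) (B t) hS),
  (fun t => Smat (A t) (B t) hS).
have hdet : forall t, P t -> \det (Umat (A t) (B t) hS) != 0.
  move=> t Pt; have := U_unit hS (hK t Pt).
  by rewrite unitmxE unitfE.
have cvA : forall t, P t -> @cvE R (within P (nbhs t)) t _ _ A.
  move=> t Pt; apply: cvE_of.
  by move/subspace_continuousP: cA; apply.
have cvB : forall t, P t -> @cvE R (within P (nbhs t)) t _ _ B.
  move=> t Pt; apply: cvE_of.
  by move/subspace_continuousP: cB; apply.
split; last first.
  move=> t Pt; have Hk := hK t Pt.
  have eTB := TB hS Hk; have eTA := TA (A t) (B t) hS.
  have uT := T_unit hS Hk; have uS := S_unit hS Hk.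
  split.
    rewrite /feedback_act_A mulmxBr !mulmxA eTB (mulmxK uS).
    have -> : Tmat (A t) (B t) hS *m A t - @B_kappa R[i] n m kappa *m Fmat (A t) (B t) hS
            = @A_kappa R[i] n m kappa *m Tmat (A t) (B t) hS.
      by rewrite -eTA opprB addrC subrK.
    by rewrite (mulmxK uT).
  by rewrite /feedback_act_B eTB (mulmxK uS).
split.
- apply/subspace_continuousP => t Pt; apply: cvE_to.
  rewrite /from_subspace; apply: cvE_T; [exact: cvA | exact: cvB | exact: hdet].
- apply/subspace_continuousP => t Pt; apply: cvE_to.
  rewrite /from_subspace; apply: cvE_F; [exact: cvA | exact: cvB | exact: hdet].
- apply/subspace_continuousP => t Pt; apply: cvE_to.
  rewrite /from_subspace; apply: cvE_S; [exact: cvA | exact: cvB | exact: hdet].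
move=> t Pt; have Hk := hK t Pt; split.
- exact: T_unit hS Hk.
- by move=> i j ji; apply: S_up hS Hk _ _ ji.
- by move=> i; apply: S_diag hS Hk i.
Qed.
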